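(* Let $f:(0,\infty)\to(0,\infty)$ be a strictly decreasing continuous bijection of $(0,\infty)$ onto $(0,\infty)$ (as is the case under (A)). Let $F:(0,\infty)\to(0,\infty)$ be a function that is continuous and strictly decreasing on some interval $[r_1,\infty)$, and suppose there exist $r_0>0$ and $0<a<2$ with $$f^2(r)\le F(r)\le f^a(r),\qquad r>r_0.$$ Let $\kappa,\widetilde\kappa>0$, let $\alpha(u)=(f^2)^{-1}(\kappa/u)$ and $\tau(u)=F^{-1}(\widetilde\kappa/u)$ for $u$ large enough (where $F^{-1}$ is the inverse of $F$ restricted to $[r_1,\infty)$). Let $m:(0,\infty)\to(0,\infty)$ be eventually increasing and let $\omega\ge0$ be such that for every $c>0$ and $\lambda\ge1$, $$\limsup_{s\to0^+}\frac{m\big(f^{-1}(cs^\lambda)\big)}{m\big(f^{-1}(s)\big)}\le\lambda^\omega. \qquad (\ast)$$ Then $$1\le\liminf_{u\to\infty}\frac{m(\tau(u))}{m(\alpha(u))}\le\limsup_{u\to\infty}\frac{m(\tau(u))}{m(\alpha(u))}\le\Big(\frac2a\Big)^{\omega}.$$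
   Context: Assumption (A) (for reference) in particular provides a strictly decreasing continuous profile $f:(0,\infty)\to(0,\infty)$ of a Lévy density with infinite total mass, which is a bijection of $(0,\infty)$ onto itself; $f^{-1}$ and $(f^2)^{-1}$ denote the inverses of $f$ and $f^2$. *)

(* Defs.v *)
From HB Require Import structures.
From mathcomp Require Import all_boot all_order all_algebra.
From mathcomp Require Import all_classical all_reals all_analysis.
Set Implicit Arguments. Unset Strict Implicit. Unset Printing Implicit Defensive.

(* Main.v *)
Require Import Defs.
From mathcomp Require Import all_boot all_order all_algebra.
From mathcomp Require Import all_classical all_reals all_analysis.
From mathcomp Require Import ring lra.
Import Order.TTheory GRing.Theory Num.Theory.
Import numFieldNormedType.Exports.
Local Open Scope classical_set_scope.
Local Open Scope ring_scope.
Section H.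
Variable R : realType.

Lemma esup_right_lt (g : R -> \bar R) (l : \bar R) :
  (limf_esup g (0^'+) < l)%E ->
  exists2 d : R, 0 < d & forall s, 0 < s -> s < d -> (g s < l)%E.
Proof.
rewrite limf_esupE => /ereal_inf_lt [y [V FV <-]] Hl.
move: FV => /nbhs_ballP [d /= d0 H].
exists d => // s s0 sd.
apply: (le_lt_trans _ Hl); apply: ereal_sup_ubound; exists s => //.
apply: H => //; rewrite /ball /= sub0r normrN gtr0_norm //.
Qed.

Lemma esup_pinfty_le (g : R -> \bar R) (l : \bar R) (U : R) :
  (forall u, U < u -> (g u <= l)%E) -> (limf_esup g (pinfty_nbhs R) <= l)%E.
Proof.
move=> H; rewrite limf_esupE; apply: ge_ereal_inf.
exists (ereal_sup (g @` [set u | U < u])).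
  by exists [set u | U < u] => //; exists U; split => //; exact: num_real.
by apply/ereal_supP => _ [u /= Uu <-]; exact: H.
Qed.

Lemma einf_pinfty_ge (g : R -> \bar R) (l : \bar R) (U : R) :
  (forall u, U < u -> (l <= g u)%E) -> (l <= limf_einf g (pinfty_nbhs R))%E.
Proof.
move=> H; rewrite limf_einfE; apply: le_ereal_sup_tmp.
exists (ereal_inf (g @` [set u | U < u])).
  by exists [set u | U < u] => //; exists U; split => //; exact: num_real.
by apply/ereal_infP => _ [u /= Uu <-]; exact: H.
Qed.

Lemma einf_le_esup_pinfty (g : R -> \bar R) :
  (limf_einf g (pinfty_nbhs R) <= limf_esup g (pinfty_nbhs R))%E.
Proof.
rewrite limf_einfE limf_esupE.
apply/ereal_supP => _ [V FV <-]; apply/ereal_infP => _ [W FW <-].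
move: FV FW => [M [_ HM]] [N [_ HN]].
set x := Num.max M N + 1.
have hx : M < x /\ N < x.
  have h1 : M <= Num.max M N by rewrite le_max lexx.
  have h2 : N <= Num.max M N by rewrite le_max lexx orbT.
  rewrite /x; split; lra.
apply: (@le_trans _ _ (g x)).
  by apply: ereal_inf_lbound; exists x => //; apply: HM; case: hx.
by apply: ereal_sup_ubound; exists x => //; apply: HN; case: hx.
Qed.

End H.

Lemma ge1_eps (R : realType) (X : \bar R) :
  (forall e : R, 0 < e -> ((1 - e)%:E <= X)%E) -> (1%:E <= X)%E.
Proof.
case: X => [x| |] H //.
- rewrite lee_fin; rewrite leNgt; apply/negP => x1.
  have := H ((1 - x) / 2); rewrite lee_fin; lra.
- by rewrite leey.
- by move: (H 1 ltr01).
Qed.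
Theorem lemma4p1 (R : realType)
  (f finv f2inv F Finv m : R -> R) (r0 r1 a kappa kappat omega : R)
  (* f : (0,oo) -> (0,oo) strictly decreasing continuous bijection *)
  (f_pos : forall x, 0 < x -> 0 < f x)
  (f_decr : forall x y, 0 < x -> x < y -> f y < f x)
  (f_cont : {in `]0, +oo[, continuous f})
  (f_onto : forall y, 0 < y -> exists2 x, 0 < x & f x = y)
  (* finv = f^{-1} and f2inv = (f^2)^{-1} on (0,oo) *)
  (finv_spec : forall y, 0 < y -> 0 < finv y /\ f (finv y) = y)
  (f2inv_spec : forall y, 0 < y -> 0 < f2inv y /\ f (f2inv y) ^+ 2 = y)
  (* F : (0,oo) -> (0,oo), continuous and strictly decreasing on [r1,oo) *)
  (F_pos : forall x, 0 < x -> 0 < F x)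
  (r1_pos : 0 < r1)
  (F_cont : {within `[r1, +oo[, continuous F})
  (F_decr : forall x y, r1 <= x -> x < y -> F y < F x)
  (* Finv = inverse of F restricted to [r1,oo) *)
  (Finv_spec : forall y, 0 < y -> y <= F r1 -> r1 <= Finv y /\ F (Finv y) = y)
  (r0_pos : 0 < r0) (a_pos : 0 < a) (a_lt2 : a < 2)
  (HF : forall r, r0 < r -> f r ^+ 2 <= F r /\ F r <= f r `^ a)
  (kappa_pos : 0 < kappa) (kappat_pos : 0 < kappat)
  (* m : (0,oo) -> (0,oo) eventually (non-strictly) increasing *)
  (m_pos : forall x, 0 < x -> 0 < m x)
  (m_incr : exists M, forall x y, M <= x -> x <= y -> m x <= m y)
  (omega_ge0 : 0 <= omega)
  (Hm : forall c lambda, 0 < c -> 1 <= lambda ->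
     (limf_esup (fun s => (m (finv (c * s `^ lambda)) / m (finv s))%:E) (0^'+)
       <= (lambda `^ omega)%:E)%E) :
  let alpha := fun u => f2inv (kappa / u) in
  let tau := fun u => Finv (kappat / u) in
  let ratio := fun u => (m (tau u) / m (alpha u))%:E in
  (1%:E <= limf_einf ratio (pinfty_nbhs R)
   /\ limf_einf ratio (pinfty_nbhs R) <= limf_esup ratio (pinfty_nbhs R)
   /\ limf_esup ratio (pinfty_nbhs R) <= ((2 / a) `^ omega)%:E)%E.
Proof.
move=> alpha tau ratio.
have f_le : forall x y, 0 < x -> x <= y -> f y <= f x.
  move=> x y x0; rewrite le_eqVlt => /orP[/eqP->//|xy].
  exact/ltW/f_decr.
have finv_f : forall x, 0 < x -> finv (f x) = x.
  move=> x x0; have [h1 h2] := finv_spec (f x) (f_pos x x0).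
  case: (ltgtP (finv (f x)) x) => // h.
  - by have := f_decr _ _ h1 h; rewrite h2 ltxx.
  - by have := f_decr _ _ x0 h; rewrite h2 ltxx.
have F_le : forall x y, r1 <= x -> x <= y -> F y <= F x.
  move=> x y x0; rewrite le_eqVlt => /orP[/eqP->//|xy].
  exact/ltW/F_decr.
case: m_incr => M HM.
set T := Num.max r1 (Num.max r0 M).
have Tr1 : r1 <= T by rewrite le_max lexx.
have Tr0 : r0 <= T by rewrite !le_max lexx orbT.
have TM : M <= T by rewrite !le_max lexx !orbT.
have FT0 : 0 < F T by apply: F_pos; lra.
have tauT : forall u, 0 < u -> kappat / F T < u ->
    [/\ T < tau u, r1 <= tau u & F (tau u) = kappat / u].
  move=> u u0 uT.
  have y0 : 0 < kappat / u by apply: divr_gt0.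
  have yT : kappat / u < F T by rewrite ltr_pdivrMr // mulrC -ltr_pdivrMr.
  have [h1 h2] := Finv_spec _ y0 (ltW (lt_le_trans yT (F_le _ _ (lexx _) Tr1))).
  split => //.
  rewrite ltNge; apply/negP => h.
  by have := F_le _ _ h1 h; rewrite h2 leNgt yT.
have T0 : 0 < T by lra.
have alphaP : forall u, 0 < u -> [/\ 0 < f2inv (kappa / u), 0 < f (f2inv (kappa / u)),
    f (f2inv (kappa / u)) ^+ 2 = kappa / u & finv (f (f2inv (kappa / u))) = f2inv (kappa / u)].
  move=> u u0; have [h1 h2] := f2inv_spec (kappa / u) (divr_gt0 kappa_pos u0).
  by split => //; [exact: f_pos | exact: finv_f].
split; last split.
- apply: ge1_eps => e e0.
  set c2 := Num.sqrt (kappat / kappa).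
  have kk0 : 0 < kappat / kappa by apply: divr_gt0.
  have c20 : 0 < c2 by rewrite sqrtr_gt0.
  have c2sq : c2 ^+ 2 = kappat / kappa by rewrite sqr_sqrtr // ltW.
  have := Hm c2^-1 1 (ltac:(by rewrite invr_gt0)) (lexx 1).
  rewrite powR1 /= => Hle.
  have : (limf_esup (fun s => (m (finv (c2^-1 * s `^ 1)) / m (finv s))%:E) (0^'+)
          < (1 + e)%:E)%E.
    by apply: (le_lt_trans Hle); rewrite lte_fin ltrDl.
  move/esup_right_lt => [d d0 Hd].
  set d' := Num.min d (f T).
  have fT0 : 0 < f T by exact: f_pos.
  have d'0 : 0 < d' by rewrite lt_min d0 fT0.
  have d'd : d' <= d by rewrite ge_min lexx.
  have d'f : d' <= f T by rewrite ge_min lexx orbT.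
  have e'0 : 0 < d' / c2 by apply: divr_gt0.
  apply: (@einf_pinfty_ge R _ _ (Num.max (Num.max 0 (kappat / F T)) (kappa / (d' / c2) ^+ 2))) => u Uu.
  have u0 : 0 < u by move: Uu; rewrite !gt_max => /andP[/andP[]].
  have uT : kappat / F T < u by move: Uu; rewrite !gt_max => /andP[/andP[]].
  have ud : kappa / (d' / c2) ^+ 2 < u by move: Uu; rewrite !gt_max => /andP[/andP[]].
  have [al0 s0 s2 fs] := alphaP u u0.
  rewrite /ratio /tau /alpha.
  set s := f (f2inv (kappa / u)) in s0 s2 fs *.
  have sd : s < d' / c2.
    have h : kappa / u < (d' / c2) ^+ 2.
      by rewrite ltr_pdivrMr // mulrC -ltr_pdivrMr // exprn_gt0.
    rewrite -s2 in h; rewrite ltNge; apply/negP => ds.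
    by move: h; rewrite !expr2 ltNge (ler_pM (ltW e'0) (ltW e'0) ds ds).
  set t := c2 * s.
  have t0 : 0 < t by apply: mulr_gt0.
  have td' : t < d' by rewrite /t mulrC -ltr_pdivlMr.
  have [tT tr1 Ftau] := tauT u u0 uT.
  rewrite /tau in tT tr1 Ftau.
  have [HFa _] := HF (Finv (kappat / u)) (le_lt_trans Tr0 tT).
  have ft0 : 0 < f (Finv (kappat / u)) by apply: f_pos; lra.
  have ftle : f (Finv (kappat / u)) <= t.
    have h : f (Finv (kappat / u)) ^+ 2 <= t ^+ 2.
      rewrite (le_trans HFa) // Ftau /t exprMn c2sq s2.
      by rewrite le_eqVlt; apply/orP; left; apply/eqP; field; apply/andP; split; rewrite gt_eqF.
    rewrite leNgt; apply/negP => h'.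
    by move: h; rewrite !expr2 leNgt (ltr_pM (ltW t0) (ltW t0) h' h').
  have [x0 fx] := finv_spec t t0.
  have tx : finv t <= Finv (kappat / u).
    rewrite leNgt; apply/negP => h.
    have := f_decr _ _ (lt_le_trans r1_pos tr1) h.
    by rewrite fx ltNge ftle.
  have Tx : T <= finv t.
    rewrite leNgt; apply/negP => h.
    have := f_decr _ _ x0 h; rewrite fx ltNge.
    by rewrite (le_trans (ltW td') d'f).
  have mle := HM _ _ (le_trans TM Tx) tx.
  have := Hd t t0 (lt_le_trans td' d'd).
  rewrite powRr1 ?(ltW t0) // /t mulKf ?gt_eqF // fs lte_fin => hlt.
  have A0 : 0 < m (f2inv (kappa / u)) by exact: m_pos.
  have B0 : 0 < m (finv (c2 * s)) by exact: m_pos.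
  rewrite lee_fin ler_pdivlMr //.
  move: hlt; rewrite ltr_pdivrMr // => hlt.
  rewrite /t in mle.
  nra.
- exact: einf_le_esup_pinfty.
- have lam1 : 1 <= 2 / a by rewrite ler_pdivlMr // mul1r ltW.
  set lam := 2 / a.
  set c := (kappat / kappa) `^ (1 / a).
  have c0 : 0 < c by apply: powR_gt0; apply: divr_gt0.
  move/(_ c lam c0 lam1): Hm => Hle.
  apply/lee_addgt0Pr => e e0.
  have : (limf_esup (fun s => (m (finv (c * s `^ lam)) / m (finv s))%:E) (0^'+)
          < (lam `^ omega + e)%:E)%E.
    by apply: (le_lt_trans Hle); rewrite lte_fin ltrDl.
  move/esup_right_lt => [d d0 Hd].
  apply: (@esup_pinfty_le R _ _ (Num.max (Num.max 0 (kappat / F T)) (kappa / d ^+ 2))) => u Uu.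
  have u0 : 0 < u by move: Uu; rewrite !gt_max => /andP[/andP[]].
  have uT : kappat / F T < u by move: Uu; rewrite !gt_max => /andP[/andP[]].
  have ud : kappa / d ^+ 2 < u by move: Uu; rewrite !gt_max => /andP[/andP[]].
  have [al0 s0 s2 fs] := alphaP u u0.
  rewrite /ratio /tau /alpha.
  set s := f (f2inv (kappa / u)) in s0 s2 fs *.
  have sd : s < d.
    have h : kappa / u < d ^+ 2.
      by rewrite ltr_pdivrMr // mulrC -ltr_pdivrMr // exprn_gt0.
    rewrite -s2 in h; rewrite ltNge; apply/negP => ds.
    by move: h; rewrite !expr2 ltNge (ler_pM (ltW d0) (ltW d0) ds ds).
  have [tT tr1 Ftau] := tauT u u0 uT.
  rewrite /tau in tT tr1 Ftau.
  have [_ HFa] := HF (Finv (kappat / u)) (le_lt_trans Tr0 tT).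
  have ft0 : 0 < f (Finv (kappat / u)) by apply: f_pos; lra.
  set y := c * s `^ lam.
  have y0 : 0 < y by apply: mulr_gt0 => //; apply: powR_gt0.
  have yle : y <= f (Finv (kappat / u)).
    have h : (kappat / u) `^ (1 / a) <= (f (Finv (kappat / u)) `^ a) `^ (1 / a).
      apply: ge0_ler_powR => //; rewrite ?nnegrE ?powR_ge0 //.
      - by rewrite divr_ge0 // ltW.
      - by rewrite divr_ge0 // ltW.
      - by move: HFa; rewrite Ftau.
    move: h; rewrite -powRrM mul1r mulfV ?gt_eqF // powRr1; last exact: ltW ft0.
    rewrite [X in X `^ a^-1](_ : _ = kappat / kappa * s ^+ 2); last first.
      by rewrite s2; field; apply/andP; split; rewrite gt_eqF.
    rewrite powRM; last (exact: sqr_ge0); last first.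
      by apply: divr_ge0; apply: ltW.
    rewrite -(powR_mulrn 2 (ltW s0)) -powRrM.
    by rewrite /y /c /lam mul1r.
  have [x0 fx] := finv_spec y y0.
  have tx : Finv (kappat / u) <= finv y.
    rewrite leNgt; apply/negP => h.
    by have := f_decr _ _ x0 h; rewrite fx ltNge yle.
  have mle := HM _ _ (le_trans TM (ltW tT)) tx.
  have := Hd s s0 sd; rewrite fs lte_fin => hlt.
  rewrite -EFinD lee_fin; apply/ltW/(le_lt_trans _ hlt).
  rewrite ler_pM2r; first exact: mle.
  by rewrite invr_gt0; apply: m_pos.
Qed.
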